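(* Consider a mean-variance team stochastic game as described in the context and run Algorithm MV-MAPI (described in the context) from any deterministic initial joint policy. Then $J(\hat{\boldsymbol{\mu}}^{(k,0)})\le J(\hat{\boldsymbol{\mu}}^{(k,1)})\le\cdots\le J(\hat{\boldsymbol{\mu}}^{(k,N)})$ for every outer iteration $k$, so the sequence $(J(\boldsymbol{\mu}^{(k)}))_k$ is monotonically non-decreasing; the algorithm converges, and the joint policy $\tilde{\boldsymbol{\mu}}$ it converges to (the returned joint policy) is a first-order stationary point, i.e. for every agent $i\in\mathcal{N}$ and every $\mu_i\in\mathcal{U}_i$, $\frac{\mathrm{d}}{\mathrm{d}\delta}J\big((1-\delta)\tilde{\mu}_i+\delta\mu_i,\tilde{\boldsymbol{\mu}}_{-i}\big)\big|_{\delta=0}\le 0$ (right derivative).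
   Context: Game: finite agents $\mathcal{N}=\{1,\dots,N\}$, finite state space $\mathcal{S}$, finite action sets $\mathcal{A}_i$, $\mathcal{A}=\prod_i\mathcal{A}_i$, transition kernel $P(s'|s,\boldsymbol{a})$, common reward $r:\mathcal{S}\times\mathcal{A}\to\mathbb{R}$. Policies $\mu_i:\mathcal{S}\to\Delta(\mathcal{A}_i)$ (set $\mathcal{U}_i$); joint policies $\boldsymbol{\mu}\in\mathcal{U}=\prod_i\mathcal{U}_i$ with $\boldsymbol{\mu}(\boldsymbol{a}|s)=\prod_i\mu_i(a_i|s)$; $(\mu_i,\boldsymbol{\mu}_{-i})$ means agent $i$ uses $\mu_i$, others use $\boldsymbol{\mu}_{-i}$; $(1-\delta)\tilde\mu_i+\delta\mu_i$ is the policy $s\mapsto(1-\delta)\tilde\mu_i(\cdot|s)+\delta\mu_i(\cdot|s)$. Standing assumption: the chain $P^{\boldsymbol{\mu}}(s'|s)=\sum_{\boldsymbol{a}}\boldsymbol{\mu}(\boldsymbol{a}|s)P(s'|s,\boldsymbol{a})$ is ergodic for every $\boldsymbol{\mu}\in\mathcal{U}$, stationary distribution $\pi^{\boldsymbol{\mu}}$. $\eta^{\boldsymbol{\mu}}=\sum_s\pi^{\boldsymbol{\mu}}(s)\sum_{\boldsymbol{a}}\boldsymbol{\mu}(\boldsymbol{a}|s)r(s,\boldsymbol{a})$; $\zeta^{\boldsymbol{\mu}}=\sum_s\pi^{\boldsymbol{\mu}}(s)\sum_{\boldsymbol{a}}\boldsymbol{\mu}(\boldsymbol{a}|s)(r(s,\boldsymbol{a})-\eta^{\boldsymbol{\mu}})^2$;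 for fixed $\beta\ge0$, $J(\boldsymbol{\mu})=\eta^{\boldsymbol{\mu}}-\beta\zeta^{\boldsymbol{\mu}}$. $f^{\boldsymbol{\mu}}(s,\boldsymbol{a})=r(s,\boldsymbol{a})-\beta(r(s,\boldsymbol{a})-\eta^{\boldsymbol{\mu}})^2$, $f^{\boldsymbol{\mu}}(s)=\sum_{\boldsymbol{a}}\boldsymbol{\mu}(\boldsymbol{a}|s)f^{\boldsymbol{\mu}}(s,\boldsymbol{a})$; $V_f^{\boldsymbol{\mu}}$ solves $V(s)=f^{\boldsymbol{\mu}}(s)-J(\boldsymbol{\mu})+\sum_{s'}P^{\boldsymbol{\mu}}(s'|s)V(s')$ (unique up to an additive constant); $Q_f^{\boldsymbol{\mu}}(s,\boldsymbol{a})=f^{\boldsymbol{\mu}}(s,\boldsymbol{a})-J(\boldsymbol{\mu})+\sum_{s'}P(s'|s,\boldsymbol{a})V_f^{\boldsymbol{\mu}}(s')$, $A_f^{\boldsymbol{\mu}}=Q_f^{\boldsymbol{\mu}}-V_f^{\boldsymbol{\mu}}$. Algorithm MV-MAPI: start with a deterministic joint policy $\boldsymbol{\mu}^{(0)}$. For $k=0,1,\dots$: set $\hat{\boldsymbol{\mu}}^{(k,0)}=\boldsymbol{\mu}^{(k)}$ and draw a random permutation $i_1,\dots,i_N$ of the agents. For $h=1,\dots,N$: compute $A_f^{\hat{\boldsymbol{\mu}}^{(k,h-1)}}$ and, for every $s$, set $\mu^{(k+1)}_{i_h}(s)$ to be an action $a_{i_h}$ maximizing $\mathbb{E}_{\boldsymbol{a}_{-i_h}\sim\hat{\boldsymbol{\mu}}^{(k,h-1)}_{-i_h}(\cdot|s)}\big[A_f^{\hat{\boldsymbol{\mu}}^{(k,h-1)}}(s,a_{i_h},\boldsymbol{a}_{-i_h})\big]$,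 choosing $\mu^{(k+1)}_{i_h}(s)=\mu^{(k)}_{i_h}(s)$ whenever $\mu^{(k)}_{i_h}(s)$ already attains the maximum; then set $\hat{\boldsymbol{\mu}}^{(k,h)}=(\mu^{(k+1)}_{i_1},\dots,\mu^{(k+1)}_{i_h},\mu^{(k)}_{i_{h+1}},\dots,\mu^{(k)}_{i_N})$. If $\mu^{(k+1)}_i=\mu^{(k)}_i$ for all $i$, stop and return $\boldsymbol{\mu}^{(k)}$; otherwise set $\boldsymbol{\mu}^{(k+1)}=\hat{\boldsymbol{\mu}}^{(k,N)}$ and continue. *)

(* Defs.v *)
From HB Require Import structures.
From mathcomp Require Import all_boot all_order all_algebra all_fingroup.
From mathcomp Require Import all_classical all_reals all_analysis.
Set Implicit Arguments. Unset Strict Implicit. Unset Printing Implicit Defensive.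
Import Order.TTheory GRing.Theory Num.Theory numFieldNormedType.Exports.
Local Open Scope ring_scope.
Local Open Scope classical_set_scope.

Definition jact (N : nat) (A : 'I_N -> finType) := {dffun forall i : 'I_N, A i}.

(* A (stochastic) joint policy: mu i s a = mu_i(a | s). *)
Definition jpol (R : realType) (S : finType) (N : nat) (A : 'I_N -> finType) :=
  forall i : 'I_N, S -> A i -> R.

Definition is_policy_i (R : realType) (S : finType) (Ai : finType)
  (mu : S -> Ai -> R) : Prop :=
  forall s, (forall a, 0 <= mu s a) /\ \sum_(a : Ai) mu s a = 1.

Definition is_jpolicy (R : realType) (S : finType) (N : nat) (A : 'I_N -> finType) (mu : @jpol R S N A) : Prop :=
  forall i, is_policy_i (mu i).

(* Transition kernel P(s'|s,a) = P s a s'. *)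
Definition is_kernel (R : realType) (S : finType) (N : nat) (A : 'I_N -> finType) (P : S -> jact A -> S -> R) : Prop :=
  forall s (a : jact A), (forall s', 0 <= P s a s') /\ \sum_(s' : S) P s a s' = 1.

Definition jprob (R : realType) (S : finType) (N : nat) (A : 'I_N -> finType) (mu : @jpol R S N A) (s : S) (a : jact A) : R :=
  \prod_(i < N) mu i s (a i).

Definition Pmu (R : realType) (S : finType) (N : nat) (A : 'I_N -> finType) (P : S -> jact A -> S -> R) (mu : @jpol R S N A)
  (s s' : S) : R :=
  \sum_(a : jact A) jprob mu s a * P s a s'.

Fixpoint pn (R : realType) (S : finType) (M : S -> S -> R) (n : nat) : S -> S -> R :=
  match n with
  | 0 => fun s s' => (s == s')%:R
  | n'.+1 => fun s s' => \sum_(t : S) pn M n' s t * M t s'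
  end.

Definition irreducible (R : realType) (S : finType) (M : S -> S -> R) : Prop :=
  forall s s', exists n, 0 < pn M n s s'.

Definition aperiodic (R : realType) (S : finType) (M : S -> S -> R) : Prop :=
  forall s (d : nat), (1 < d)%N ->
    ~ (forall n, (0 < n)%N -> 0 < pn M n s s -> (d %| n)%N).

Definition ergodic (R : realType) (S : finType) (M : S -> S -> R) : Prop :=
  irreducible M /\ aperiodic M.

Definition is_stationary (R : realType) (S : finType) (M : S -> S -> R) (p : {ffun S -> R}) : Prop :=
  (forall s, 0 <= p s) /\ \sum_(s : S) p s = 1 /\
  (forall s', \sum_(s : S) p s * M s s' = p s').

(* pi^mu : the stationary distribution (unique under ergodicity) *)
Definition pi_mu (R : realType) (S : finType) (N : nat) (A : 'I_N -> finType) (P : S -> jact A -> S -> R) (mu : @jpol R S N A)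
  : {ffun S -> R} :=
  xget [ffun => 0] [set p | is_stationary (Pmu P mu) p].

Definition eta (R : realType) (S : finType) (N : nat) (A : 'I_N -> finType) (P : S -> jact A -> S -> R) (r : S -> jact A -> R)
  (mu : @jpol R S N A) : R :=
  \sum_(s : S) pi_mu P mu s * \sum_(a : jact A) jprob mu s a * r s a.

Definition zeta (R : realType) (S : finType) (N : nat) (A : 'I_N -> finType) (P : S -> jact A -> S -> R) (r : S -> jact A -> R)
  (mu : @jpol R S N A) : R :=
  \sum_(s : S) pi_mu P mu s *
    \sum_(a : jact A) jprob mu s a * (r s a - eta P r mu) ^+ 2.

Definition Jmv (R : realType) (S : finType) (N : nat) (A : 'I_N -> finType) (P : S -> jact A -> S -> R) (r : S -> jact A -> R)
  (beta : R) (mu : @jpol R S N A) : R :=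
  eta P r mu - beta * zeta P r mu.

Definition f_sa (R : realType) (S : finType) (N : nat) (A : 'I_N -> finType) (P : S -> jact A -> S -> R) (r : S -> jact A -> R)
  (beta : R) (mu : @jpol R S N A) (s : S) (a : jact A) : R :=
  r s a - beta * (r s a - eta P r mu) ^+ 2.

Definition f_s (R : realType) (S : finType) (N : nat) (A : 'I_N -> finType) (P : S -> jact A -> S -> R) (r : S -> jact A -> R)
  (beta : R) (mu : @jpol R S N A) (s : S) : R :=
  \sum_(a : jact A) jprob mu s a * f_sa P r beta mu s a.

Definition is_Vf (R : realType) (S : finType) (N : nat) (A : 'I_N -> finType) (P : S -> jact A -> S -> R) (r : S -> jact A -> R)
  (beta : R) (mu : @jpol R S N A) (V : {ffun S -> R}) : Prop :=
  forall s, V s = f_s P r beta mu s - Jmv P r beta mu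
                  + \sum_(s' : S) Pmu P mu s s' * V s'.

(* a solution (unique up to an additive constant; A_f does not depend on the choice) *)
Definition Vf (R : realType) (S : finType) (N : nat) (A : 'I_N -> finType) (P : S -> jact A -> S -> R) (r : S -> jact A -> R)
  (beta : R) (mu : @jpol R S N A) : {ffun S -> R} :=
  xget [ffun => 0] [set V | is_Vf P r beta mu V].

Definition Qf (R : realType) (S : finType) (N : nat) (A : 'I_N -> finType) (P : S -> jact A -> S -> R) (r : S -> jact A -> R)
  (beta : R) (mu : @jpol R S N A) (s : S) (a : jact A) : R :=
  f_sa P r beta mu s a - Jmv P r beta mu + \sum_(s' : S) P s a s' * Vf P r beta mu s'.

Definition Af (R : realType) (S : finType) (N : nat) (A : 'I_N -> finType) (P : S -> jact A -> S -> R) (r : S -> jact A -> R)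
  (beta : R) (mu : @jpol R S N A) (s : S) (a : jact A) : R :=
  Qf P r beta mu s a - Vf P r beta mu s.

Definition ExpAdv (R : realType) (S : finType) (N : nat) (A : 'I_N -> finType) (P : S -> jact A -> S -> R) (r : S -> jact A -> R)
  (beta : R) (mu : @jpol R S N A) (j : 'I_N) (s : S) (aj : A j) : R :=
  \sum_(b : jact A)
     (\prod_(i < N | i != j) mu i s (b i)) * (b j == aj)%:R * Af P r beta mu s b.

Definition detpol (S : finType) (N : nat) (A : 'I_N -> finType) := forall i : 'I_N, S -> A i.

Definition of_det (R : realType) (S : finType) (N : nat) (A : 'I_N -> finType) (d : @detpol S N A) : @jpol R S N A :=
  fun i s a => (a == d i s)%:R.

Definition mix (R : realType) (S : finType) (N : nat) (A : 'I_N -> finType) (mu : @jpol R S N A) (i : 'I_N)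
  (nu : S -> A i -> R) (delta : R) : @jpol R S N A :=
  eqtype.dfwith (T := fun j => S -> A j -> R) mu
    (fun s a => (1 - delta) * mu i s a + delta * nu s a).
Arguments mix {R S N A} mu i nu delta.

Definition fo_stationary (R : realType) (S : finType) (N : nat) (A : 'I_N -> finType) (P : S -> jact A -> S -> R)
  (r : S -> jact A -> R) (beta : R) (mu : @jpol R S N A) : Prop :=
  forall (i : 'I_N) (nu : S -> A i -> R), is_policy_i nu ->
    exists l : R,
      ((fun delta : R => (Jmv P r beta (mix mu i nu delta) - Jmv P r beta (mix mu i nu 0))
                          / delta) @ (0 : R)^'+ --> l) /\ l <= 0.

(* MV-MAPI run: mu k = mu^(k); sigma k = permutation (sigma k h = i_{h+1}).
   hat mu sigma k h = \hat mu^(k,h): the first h agents of the order updated. *)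
Definition hat (S : finType) (N : nat) (A : 'I_N -> finType) (mu : nat -> @detpol S N A) (sigma : nat -> {perm 'I_N})
  (k h : nat) : @detpol S N A :=
  fun i => if (nat_of_ord ((sigma k)^-1 i)%g < h)%N then mu k.+1 i else mu k i.

Definition stopped (S : finType) (N : nat) (A : 'I_N -> finType) (mu : nat -> @detpol S N A) (k : nat) : Prop :=
  forall i s, mu k.+1 i s = mu k i s.

(* mu (k+1) collects the mu^(k+1)_i chosen in iteration k (equal to \hat mu^(k,N));
   once the stopping test holds, the iteration is a fixed point. *)
Definition MV_MAPI_run (R : realType) (S : finType) (N : nat) (A : 'I_N -> finType) (P : S -> jact A -> S -> R)
  (r : S -> jact A -> R) (beta : R)
  (mu : nat -> @detpol S N A) (sigma : nat -> {perm 'I_N}) : Prop :=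
  forall (k : nat) (h : 'I_N) (s : S),
    let j := sigma k h in
    let pol := of_det R (hat mu sigma k h) in
    (forall a : A j, ExpAdv P r beta pol s a <= ExpAdv P r beta pol s (mu k.+1 j s)) /\
    ((forall a : A j, ExpAdv P r beta pol s a <= ExpAdv P r beta pol s (mu k j s)) ->
       mu k.+1 j s = mu k j s).

(* Main.v *)
Require Import Defs.
From HB Require Import structures.
From mathcomp Require Import all_boot all_order all_algebra all_fingroup.
From mathcomp Require Import all_classical all_reals all_analysis.
From mathcomp Require Import zify ring lra.
Import Order.TTheory GRing.Theory Num.Theory numFieldNormedType.Exports.
Local Open Scope ring_scope.

Lemma sum_prod_dep (R : realType) (N : nat) (A : 'I_N -> finType) (w : forall i, A i -> R) :
  \sum_(b : jact A) \prod_(i < N) w i (b i) = \prod_(i < N) \sum_(a : A i) w i a.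
Proof.
pose P_ := fun i => [ffun a : A i => w i a].
transitivity (\sum_(t : fprod A) \prod_(i < N) P_ i (t i)).
  rewrite (reindex (@dffun_of_fprod _ A)); last exact/onW_bij/dffun_of_fprod_bij.
  apply: eq_bigr => t _; apply: eq_bigr => i _; by rewrite !ffunE.
rewrite big_fprod.
rewrite -(bigA_distr_big_dep (fun i => tagged_with A i) (fun i j => untag 0 (P_ i) j)).
apply: eq_bigr => i _.
transitivity (\sum_(a : A i) P_ i a); last by apply: eq_bigr => a _; rewrite ffunE.
by rewrite (big_tag (fun i a => P_ i a) i).
Qed.

Section Markov.
Context (R : realType) (S : finType) (M : S -> S -> R).
Definition stoch := (forall s s', 0 <= M s s') /\ (forall s, \sum_s' M s s' = 1).
Definition invm (x : S -> R) := forall s', \sum_s x s * M s s' = x s'.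

Hypothesis HM : stoch.

Lemma subinv_eq {x : S -> R} : (forall s', x s' <= \sum_s x s * M s s') -> invm x.
Proof.
move=> Hx.
have H0 : \sum_s' (\sum_s x s * M s s' - x s') = 0.
  rewrite sumrB exchange_big /=.
  under eq_bigr do rewrite -mulr_sumr HM.2 mulr1.
  by rewrite subrr.
have H1 : forall t, true -> 0 <= \sum_s x s * M s t - x t by move=> t _; rewrite subr_ge0.
have H2 := psumr_eq0P H1 H0.
move=> s'; apply/eqP; rewrite -subr_eq0; apply/eqP.
exact: H2.
Qed.

Lemma pn_ge0 n s s' : 0 <= pn M n s s'.
Proof.
elim: n s s' => [|n IH] s s' /=; first by rewrite ler0n.
by apply: sumr_ge0 => t _; apply: mulr_ge0 => //; apply: HM.1.
Qed.

Lemma invm_pn {x} : invm x -> forall n s', \sum_s x s * pn M n s s' = x s'.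
Proof.
move=> Hx; elim=> [|n IH] s' /=.
  rewrite (bigD1 s') //= eqxx mulr1 big1 ?addr0 // => s /negPf.
  by rewrite eq_sym => ->; rewrite mulr0.
under eq_bigr do rewrite mulr_sumr.
rewrite exchange_big /= -{1}(Hx s'); apply: eq_bigr => t _.
by rewrite -IH mulr_suml; apply: eq_bigr => s _; rewrite mulrA.
Qed.

Hypothesis Hirr : irreducible M.

Lemma invm_zero {x} {s0} : invm x -> (forall s, 0 <= x s) -> x s0 = 0 -> forall s, x s = 0.
Proof.
move=> Hx Hpos H0 s.
have [n Hn] := Hirr s s0.
have Hs := invm_pn Hx n s0.
rewrite H0 (bigD1 s) //= in Hs.
have H1 : 0 <= \sum_(t | t != s) x t * pn M n t s0.
  by apply: sumr_ge0 => t _; apply: mulr_ge0 => //; apply: pn_ge0.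
have H2 : x s * pn M n s s0 = 0.
  apply/eqP; rewrite eq_le mulr_ge0 ?andbT ?Hpos ?pn_ge0 //.
  by rewrite -(lerD2r (\sum_(t | t != s) x t * pn M n t s0)) Hs add0r.
by move/eqP: H2; rewrite mulf_eq0 (gt_eqF Hn) orbF => /eqP.
Qed.

Lemma stat_pos {p : {ffun S -> R}} : is_stationary M p -> forall s, 0 < p s.
Proof.
case=> Hp [Hs Hinv] s; rewrite lt_def Hp andbT; apply/negP => /eqP H0.
have Z := invm_zero Hinv Hp H0.
by move: Hs; rewrite big1 // => /esym/eqP; rewrite oner_eq0.
Qed.

Lemma invm_max {x} : invm x -> invm (fun s => Num.max (x s) 0).
Proof.
move=> Hx; apply: subinv_eq => s'.
rewrite ge_max; apply/andP; split; last first.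
  by apply: sumr_ge0 => t _; apply: mulr_ge0 => //; [rewrite le_max lexx orbT|apply HM.1].
rewrite -{1}(Hx s'); apply: ler_sum => t _; apply: ler_wpM2r; first exact: HM.1.
by rewrite le_max lexx.
Qed.

Lemma invm_le0 {x} {s0} : invm x -> x s0 = 0 -> forall s, x s <= 0.
Proof.
move=> Hx H0 s.
have Hy := invm_max Hx.
have Hpos : forall s, 0 <= Num.max (x s) 0 by move=> t; rewrite le_max lexx orbT.
have Hy0 : Num.max (x s0) 0 = 0 by rewrite H0 maxxx.
have := invm_zero Hy Hpos Hy0 s.
by move=> H; rewrite -H le_max lexx.
Qed.

Lemma invm_neg {x} : invm x -> invm (fun s => - x s).
Proof. by move=> Hx s'; rewrite -(Hx s') -sumrN; apply: eq_bigr => s _; rewrite mulNr. Qed.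

Lemma invm_sub {x y} : invm x -> invm y -> invm (fun s => x s - y s).
Proof. by move=> Hx Hy s'; rewrite -(Hx s') -(Hy s') -sumrB; apply: eq_bigr => s _; rewrite mulrBl. Qed.

Lemma invm_scale {x} c : invm x -> invm (fun s => c * x s).
Proof. by move=> Hx s'; rewrite -(Hx s') mulr_sumr; apply: eq_bigr => s _; rewrite mulrA. Qed.

Lemma kernel1 {p : {ffun S -> R}} {x} : is_stationary M p -> invm x ->
  exists c, forall s, x s = c * p s.
Proof.
move=> Hp Hx.
have [s0 _] : exists s0 : S, true.
  case: (pickP (@predT S)) => [s0 _|H0]; first by exists s0.
  by case: Hp => _ [Hs _]; move: Hs; rewrite big_pred0 // => /esym/eqP; rewrite oner_eq0.
have Hp0 := stat_pos Hp s0.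
exists (x s0 / p s0) => s.
pose w := fun s => x s - x s0 / p s0 * p s.
have Hw : invm w by apply: invm_sub => //; apply: invm_scale; case: Hp => _ [].
have Hw0 : w s0 = 0 by rewrite /w mulrVK ?subrr // unitfE gt_eqF.
have H1 := invm_le0 Hw Hw0 s.
have Hw0' : - w s0 = 0 by rewrite Hw0 oppr0.
have H2 := invm_le0 (invm_neg Hw) Hw0' s.
apply/eqP; rewrite -subr_eq0; apply/eqP/le_anti.
by rewrite H1 /= -oppr_le0.
Qed.


Lemma sumS (F : S -> R) : \sum_(s : S) F s = \sum_(i < #|S|) F (enum_val i).
Proof. by rewrite (reindex (@enum_val S predT)) //; apply/onW_bij/enum_val_bij. Qed.

Definition Bm : 'M[R]_#|S| := \matrix_(i, j) ((i == j)%:R - M (enum_val i) (enum_val j)).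

Lemma rowB_invm {v : 'rV_#|S|} : v *m Bm = 0 -> invm (fun s => v 0 (enum_rank s)).
Proof.
move=> Hv s'.
have := congr1 (fun A : 'rV[R]_#|S| => A 0 (enum_rank s')) Hv; rewrite !mxE.
under eq_bigr do rewrite mxE mulrBr.
rewrite sumrB (bigD1 (enum_rank s')) //= eqxx mulr1 big1 ?addr0; last first.
  by move=> i /negPf ->; rewrite mulr0.
move/eqP; rewrite subr_eq0 => /eqP H.
rewrite [RHS]H sumS; apply: eq_bigr => i _; by rewrite enum_valK enum_rankK.
Qed.

Lemma stat_exists (s0 : S) : exists p, is_stationary M p.
Proof.
have : \det Bm == 0.
  rewrite -det_tr; apply/det0P; exists (const_mx 1).
    apply/eqP => /matrixP /(_ 0 (enum_rank s0)); rewrite !mxE; apply/eqP; exact: oner_neq0.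
  apply/rowP => j; rewrite !mxE.
  under eq_bigr do rewrite !mxE mul1r.
  rewrite sumrB (bigD1 j) //= eqxx big1 ?addr0; last by move=> i /negPf; rewrite eq_sym => ->.
  by rewrite -sumS HM.2 subrr.
case/det0P => v Hv0 Hv.
pose x : S -> R := fun s => v 0 (enum_rank s).
have Hx : invm x by exact: rowB_invm.
have Hy : invm (fun s => `|x s|).
  apply: subinv_eq => s'; rewrite -{1}(Hx s').
  apply: le_trans (ler_norm_sum _ _ _) _; apply: ler_sum => s _.
  by rewrite normrM (ger0_norm (HM.1 _ _)).
have [k Hk] : exists k, v 0 k != 0.
  apply/existsP; move: Hv0; apply: contraR; rewrite negb_exists => /forallP H.
  by apply/eqP/rowP => k; rewrite mxE; apply/eqP/negbNE/H.
have HZ : 0 < \sum_s `|x s|.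
  rewrite (bigD1 (enum_val k)) //= /x enum_valK.
  by rewrite ltr_pwDl ?normr_gt0 // sumr_ge0.
exists [ffun s => `|x s| / \sum_s `|x s|]; split; [|split].
  by move=> s; rewrite ffunE divr_ge0 // ltW.
  by under eq_bigr do rewrite ffunE; rewrite -mulr_suml mulfV ?gt_eqF.
move=> s'; rewrite ffunE -(Hy s') mulr_suml; apply: eq_bigr => s _.
by rewrite ffunE mulrAC.
Qed.

Lemma poisson (p : {ffun S -> R}) (h : S -> R) : is_stationary M p ->
  \sum_s p s * h s = 0 ->
  exists u : {ffun S -> R}, forall s, u s = h s + \sum_s' M s s' * u s'.
Proof.
move=> Hp Hh.
have [s0 _] : exists s0 : S, true.
  case: (pickP (@predT S)) => [s0 _|H0]; first by exists s0.
  by case: Hp => _ [Hs _]; move: Hs; rewrite big_pred0 // => /esym/eqP; rewrite oner_eq0.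
pose pc : 'cV[R]_#|S| := \col_i p (enum_val i).
pose hr : 'rV[R]_#|S| := \row_i h (enum_val i).
pose prow : 'rV[R]_#|S| := \row_i p (enum_val i).
have H1 : (hr <= kermx pc)%MS.
  apply/sub_kermxP; apply/matrixP => i j; rewrite !ord1 !mxE.
  under eq_bigr do rewrite !mxE.
  by rewrite -(sumS (fun s => h s * p s)) -[RHS]Hh; apply: eq_bigr => s _; rewrite mulrC.
have H2 : (Bm^T <= kermx pc)%MS.
  apply/sub_kermxP; apply/matrixP => i j; rewrite !ord1 !mxE.
  under eq_bigr do rewrite !mxE mulrBl.
  rewrite sumrB (bigD1 i) //= eqxx mul1r big1 ?addr0; last first.
    by move=> k /negPf ->; rewrite mul0r.
  have [_ [_ Hinv]] := Hp.
  rewrite -(sumS (fun s => M s (enum_val i) * p s)) -{1}(Hinv (enum_val i)); apply/eqP; rewrite subr_eq0; apply/eqP/eq_bigr => s _; by rewrite mulrC.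
have H3 : (kermx Bm <= prow)%MS.
  apply/row_subP => k.
  set v := row k (kermx Bm).
  have Hv : v *m Bm = 0 by rewrite /v -row_mul mulmx_ker row0.
  have [c Hc] := kernel1 Hp (rowB_invm Hv).
  apply/sub_rVP; exists c; apply/rowP => j.
  have := Hc (enum_val j); rewrite enum_valK => ->.
  by rewrite [in RHS]mxE [in RHS]mxE.
have Hpc : pc != 0.
  apply/eqP => /matrixP /(_ (enum_rank s0) 0); rewrite !mxE enum_rankK.
  by move=> H; move: (stat_pos Hp s0); rewrite H ltxx.
have R1 : (\rank (kermx Bm) <= 1)%N.
  by apply: leq_trans (mxrankS H3) (rank_leq_row _).
have R2 : (1 <= \rank pc)%N by rewrite lt0n mxrank_eq0.
have R3 := rank_leq_col pc.
have R4 := rank_leq_row Bm.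
move: R1; rewrite mxrank_ker => R1.
have R5 := mxrank_ker pc.
have Req : \rank Bm^T == \rank (kermx pc).
  have R6 := mxrankS H2; rewrite mxrank_tr R5 in R6; by rewrite mxrank_tr R5; apply/eqP; lia.
rewrite (mxrank_leqif_sup H2).2 in Req.
have [D HD] := submxP (submx_trans H1 Req).
exists [ffun s => D 0 (enum_rank s)] => s.
have := congr1 (fun A : 'rV[R]_#|S| => A 0 (enum_rank s)) HD; rewrite !mxE enum_rankK.
under eq_bigr do rewrite !mxE mulrBr.
rewrite sumrB (bigD1 (enum_rank s)) //= eqxx mulr1 big1 ?addr0; last first.
  by move=> i; rewrite eq_sym => /negPf ->; rewrite mulr0.
move=> ->; rewrite ffunE enum_rankK (sumS (fun s' => M s s' * _)).
under [X in _ = _ + X]eq_bigr do rewrite ffunE enum_valK.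
rewrite -addrA [X in _ = _ + X](_ : _ = 0) ?addr0 // addrC; apply/eqP; rewrite subr_eq0; apply/eqP/eq_bigr => i _; by rewrite mulrC.
Qed.
End Markov.
Arguments stoch {R S} M.
Arguments invm {R S} M x.
Arguments stat_exists {R S M} HM s0.
Arguments stat_pos {R S M} HM Hirr {p} _ s.
Arguments poisson {R S M} HM Hirr {p h} _ _.
Arguments sumS {R S} F.
Arguments pn_ge0 {R S M} HM n s s'.
Arguments invm_pn {R S M x} _ n s'.

Section MDP.
Context (R : realType) (S : finType) (N : nat) (A : 'I_N -> finType)
  (P : S -> jact A -> S -> R) (r : S -> jact A -> R) (beta : R).
Hypothesis HP : is_kernel P.

Lemma jprob_ge0 {nu : jpol R S A} s b : is_jpolicy nu -> 0 <= jprob nu s b.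
Proof. by move=> Hnu; apply: prodr_ge0 => i _; apply: (Hnu i s).1. Qed.

Lemma jprob_sum1 {nu : jpol R S A} s : is_jpolicy nu -> \sum_b jprob nu s b = 1.
Proof.
move=> Hnu; rewrite /jprob (@sum_prod_dep R N A (fun i a => nu i s a)); apply: big1 => i _; exact: (Hnu i s).2.
Qed.

Lemma Pmu_stoch {nu : jpol R S A} : is_jpolicy nu -> stoch (Pmu P nu).
Proof.
move=> Hnu; split.
  by move=> s s'; apply: sumr_ge0 => b _; apply: mulr_ge0; [exact: jprob_ge0|exact: (HP s b).1].
move=> s; rewrite /Pmu exchange_big /=.
under eq_bigr do rewrite -mulr_sumr (HP s _).2 mulr1.
exact: jprob_sum1.
Qed.

Lemma pi_stat {nu : jpol R S A} (s0 : S) : is_jpolicy nu ->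
  is_stationary (Pmu P nu) (pi_mu P nu).
Proof.
move=> Hnu; rewrite /pi_mu.
have := @xgetPex _ [ffun => 0] [set p | is_stationary (Pmu P nu) p] (stat_exists (Pmu_stoch Hnu) s0).
by [].
Qed.

Definition Lf (pi : S -> R) (q : S -> jact A -> R) (F : S -> jact A -> R) :=
  \sum_s pi s * \sum_b q s b * F s b.

Lemma eq_Lf {p0 : S -> R} {q : S -> jact A -> R} {F : S -> jact A -> R} (G : S -> jact A -> R) : (forall s b, F s b = G s b) -> Lf p0 q F = Lf p0 q G.
Proof. by move=> H; apply: eq_bigr => s _; congr (_ * _); apply: eq_bigr => b _; rewrite H. Qed.

Lemma LfD pi q F G : Lf pi q (fun s b => F s b + G s b) = Lf pi q F + Lf pi q G.
Proof.
rewrite /Lf -big_split /=; apply: eq_bigr => s _; rewrite -mulrDr -big_split /=.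
by congr (_ * _); apply: eq_bigr => b _; rewrite mulrDr.
Qed.

Lemma LfZ pi q c F : Lf pi q (fun s b => c * F s b) = c * Lf pi q F.
Proof.
rewrite /Lf mulr_sumr; apply: eq_bigr => s _; rewrite mulrCA; congr (_ * _).
by rewrite mulr_sumr; apply: eq_bigr => b _; rewrite mulrCA.
Qed.

Lemma Lfc pi q c : \sum_s pi s = 1 -> (forall s, \sum_b q s b = 1) -> Lf pi q (fun _ _ => c) = c.
Proof.
move=> H1 H2; rewrite /Lf.
under eq_bigr do rewrite -mulr_suml H2 mul1r.
by rewrite -mulr_suml H1 mul1r.
Qed.

Lemma Lfs pi q (g : S -> R) : (forall s, \sum_b q s b = 1) -> Lf pi q (fun s _ => g s) = \sum_s pi s * g s.
Proof.
move=> H2; rewrite /Lf; apply: eq_bigr => s _.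
by rewrite -mulr_suml H2 mul1r.
Qed.

Lemma LfP (nu : jpol R S A) (pi : {ffun S -> R}) (V : S -> R) :
  is_stationary (Pmu P nu) pi ->
  Lf pi (jprob nu) (fun s b => \sum_s' P s b s' * V s') = \sum_s' pi s' * V s'.
Proof.
case=> _ [_ Hinv]; rewrite /Lf.
transitivity (\sum_s' (\sum_s pi s * Pmu P nu s s') * V s'); last first.
  by apply: eq_bigr => s' _; rewrite Hinv.
under [RHS]eq_bigr do rewrite mulr_suml.
rewrite exchange_big /=; apply: eq_bigr => s _.
rewrite mulr_sumr; under [RHS]eq_bigr do rewrite /Pmu mulr_sumr mulr_suml.
rewrite exchange_big /=; apply: eq_bigr => b _.
rewrite mulr_sumr mulr_sumr; apply: eq_bigr => s' _.
by rewrite !mulrA.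
Qed.

Lemma Lfq pi q0 q1 a c F :
  Lf pi (fun s b => a * q0 s b + c * q1 s b) F = a * Lf pi q0 F + c * Lf pi q1 F.
Proof.
rewrite /Lf !mulr_sumr -big_split /=; apply: eq_bigr => s _.
rewrite mulrCA [c * _]mulrCA -mulrDr; congr (_ * _).
rewrite !mulr_sumr -big_split /=; apply: eq_bigr => b _.
by rewrite mulrDl !mulrA.
Qed.


Lemma Lf_fsa (nu nu' : jpol R S A) (s0 : S) : is_jpolicy nu' ->
  Lf (pi_mu P nu') (jprob nu') (f_sa P r beta nu) =
  Jmv P r beta nu' - beta * (Defs.eta P r nu' - Defs.eta P r nu) ^+ 2.
Proof.
move=> Hnu'.
have [_ [H1 _]] := pi_stat s0 Hnu'.
have Hq := fun s => jprob_sum1 s Hnu'.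
set pi' := pi_mu P nu'; set q := jprob nu'.
set e := Defs.eta P r nu; set e' := Defs.eta P r nu'.
pose Z := fun s b => (r s b - e') ^+ 2.
rewrite (eq_Lf (fun s b => r s b + ((-beta) * Z s b + ((-(2 * beta * (e' - e))) * r s b + (fun _ _ => -(beta * (e ^+ 2 - e' ^+ 2))) s b)))); last first.
  by move=> s b; rewrite /f_sa -/e /Z; ring.
rewrite (LfD pi' q r (fun s b => (-beta) * Z s b + ((-(2 * beta * (e' - e))) * r s b + (fun _ _ => -(beta * (e ^+ 2 - e' ^+ 2))) s b))).
rewrite (LfD pi' q (fun s b => (-beta) * Z s b)).
rewrite (LfD pi' q (fun s b => (-(2 * beta * (e' - e))) * r s b)).
rewrite (LfZ pi' q (-beta) Z) (LfZ pi' q _ r) Lfc //.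
have -> : Lf pi' q r = e' by [].
have -> : Lf pi' q Z = zeta P r nu' by [].
rewrite /Jmv -/e'; ring.
Qed.

Lemma Vf_is (nu : jpol R S A) (s0 : S) : is_jpolicy nu -> irreducible (Pmu P nu) ->
  is_Vf P r beta nu (Vf P r beta nu).
Proof.
move=> Hnu Hirr.
have Hst := pi_stat s0 Hnu.
have [_ [H1 _]] := Hst.
have Hh : \sum_s pi_mu P nu s * (f_s P r beta nu s - Jmv P r beta nu) = 0.
  under eq_bigr do rewrite mulrBr.
  rewrite sumrB -mulr_suml H1 mul1r.
  have -> : \sum_s pi_mu P nu s * f_s P r beta nu s = Lf (pi_mu P nu) (jprob nu) (f_sa P r beta nu) by [].
  by rewrite (Lf_fsa nu nu s0 Hnu) subrr expr0n /= mulr0 subr0 subrr.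
have [u Hu] := poisson (Pmu_stoch Hnu) Hirr Hst Hh.
rewrite /Vf.
have := @xgetPex _ [ffun => 0] [set V | is_Vf P r beta nu V].
apply; exists u => s /=; rewrite Hu; congr (_ + _); apply: eq_bigr => s' _; by [].
Qed.

Lemma perf_diff (nu nu' : jpol R S A) (s0 : S) : is_jpolicy nu' ->
  is_Vf P r beta nu (Vf P r beta nu) ->
  Jmv P r beta nu' - Jmv P r beta nu =
  Lf (pi_mu P nu') (jprob nu') (Af P r beta nu) + beta * (Defs.eta P r nu' - Defs.eta P r nu) ^+ 2.
Proof.
move=> Hnu' HV.
have Hst := pi_stat s0 Hnu'.
have [_ [H1 _]] := Hst.
have Hq := fun s => jprob_sum1 s Hnu'.
set pi' := pi_mu P nu'; set q := jprob nu'.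
set V := Vf P r beta nu; set J := Jmv P r beta nu.
pose PV := fun s b => \sum_s' P s b s' * V s'.
rewrite (eq_Lf (fun s b => f_sa P r beta nu s b + ((fun _ _ => - J) s b + (PV s b + (fun s _ => - V s) s b)))); last first.
  by move=> s b; rewrite /Af /Qf /PV -/V -/J; ring.
rewrite (LfD pi' q (f_sa P r beta nu) (fun s b => (fun _ _ => - J) s b + (PV s b + (fun s _ => - V s) s b))).
rewrite (LfD pi' q (fun _ _ => - J) (fun s b => PV s b + (fun s _ => - V s) s b)).
rewrite (LfD pi' q PV (fun s _ => - V s)).
rewrite Lfc // (LfP nu' pi' V Hst) (Lfs _ _ (fun s => - V s)) //.
rewrite (Lf_fsa nu nu' s0 Hnu') /=.
under [X in _ = _ + (_ + (_ + X)) + _]eq_bigr do rewrite mulrN.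
rewrite sumrN -/J; ring.
Qed.
End MDP.
Arguments Lf {R S N A} pi q F.
Arguments eq_Lf {R S N A p0 q F} G _.
Arguments LfD {R S N A} pi q F G.
Arguments LfZ {R S N A} pi q c F.
Arguments Lfc {R S N A} pi q c _ _.
Arguments Lfs {R S N A} pi q g _.
Arguments LfP {R S N A P} nu pi V _.
Arguments Lfq {R S N A} pi q0 q1 a c F.
Arguments Lf_fsa {R S N A P r beta} HP nu nu' s0 _.
Arguments Vf_is {R S N A P r beta} HP nu s0 _ _.
Arguments perf_diff {R S N A P r beta} HP nu nu' s0 _ _.
Arguments jprob_ge0 {R S N A nu} s b _.
Arguments jprob_sum1 {R S N A nu} s _.
Arguments Pmu_stoch {R S N A P} HP {nu} _.
Arguments pi_stat {R S N A P} HP {nu} s0 _.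

Section Shift.
Context (R : realType) (S : finType).

Lemma mshift (M0 M1 : S -> S -> R) (p0 pd : S -> R) (d : R) (h u : S -> R) :
  (forall s, u s = (h s - \sum_t p0 t * h t) + \sum_s' M0 s s' * u s') ->
  \sum_s pd s = 1 ->
  (forall s', \sum_s pd s * ((1 - d) * M0 s s' + d * M1 s s') = pd s') ->
  \sum_s pd s * h s - \sum_s p0 s * h s =
  d * \sum_s pd s * (\sum_s' M1 s s' * u s' - \sum_s' M0 s s' * u s').
Proof.
move=> Hu H1 Hst.
set c := \sum_t p0 t * h t in Hu *.
pose M0u := fun s => \sum_s' M0 s s' * u s'.
pose M1u := fun s => \sum_s' M1 s s' * u s'.
have E1 : \sum_s pd s * u s = \sum_s pd s * ((1 - d) * M0u s + d * M1u s).
  transitivity (\sum_s' (\sum_s pd s * ((1 - d) * M0 s s' + d * M1 s s')) * u s').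
    by apply: eq_bigr => s' _; rewrite Hst.
  under eq_bigr do rewrite mulr_suml.
  rewrite exchange_big /=; apply: eq_bigr => s _.
  rewrite /M0u /M1u !mulr_sumr -big_split /= mulr_sumr; apply: eq_bigr => s' _.
  ring.
have E2 : \sum_s pd s * (h s - c) = \sum_s pd s * u s - \sum_s pd s * M0u s.
  rewrite -sumrB; apply: eq_bigr => s _; rewrite (Hu s) /M0u; ring.
have E3 : \sum_s pd s * (h s - c) = \sum_s pd s * h s - c.
  under eq_bigr do rewrite mulrBr.
  by rewrite sumrB -mulr_suml H1 mul1r.
rewrite -E3 E2 E1 -sumrB mulr_sumr; apply: eq_bigr => s _; rewrite /M0u /M1u; ring.
Qed.

Lemma bound_sum (pd : S -> R) (Y : S -> R) : (forall s, 0 <= pd s) -> \sum_s pd s = 1 ->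
  `|\sum_s pd s * Y s| <= \sum_s `|Y s|.
Proof.
move=> H0 H1; apply: le_trans (ler_norm_sum _ _ _) _; apply: ler_sum => s _.
rewrite normrM (ger0_norm (H0 s)).
have Hs1 : pd s <= 1.
  rewrite -H1 (bigD1 s) //= lerDl; exact: sumr_ge0.
by rewrite -[X in _ <= X]mul1r ler_wpM2r.
Qed.
End Shift.
Arguments mshift {R S M0 M1 p0 pd d h u} _ _ _.
Arguments bound_sum {R S pd Y} _ _.

Local Open Scope classical_set_scope.

Lemma lim_lin (R : realType) (f : R -> R) (l C : R) :
  (forall d, 0 < d -> d < 1 -> `|f d - l| <= C * d) -> f @ (0:R)^'+ --> l.
Proof.
move=> H; apply/cvgrPdist_le => e e0.
have eC : 0 < e / (`|C| + 1) by rewrite divr_gt0 // ltr_pwDr.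
near=> d.
have d0 : 0 < d by near: d; exact: nbhs_right_gt.
have d1 : d < 1 by near: d; exact: nbhs_right_lt.
have dC : d <= e / (`|C| + 1) by near: d; exact: nbhs_right_ltW.
rewrite distrC; apply: le_trans (H d d0 d1) _.
have HC : C <= `|C| := ler_norm C.
have HC0 : 0 <= `|C| := normr_ge0 C.
move: dC; rewrite ler_pdivlMr ?ltr_pwDr // => dC.
nra.
Unshelve. all: by end_near.
Qed.

Section Agents.
Context (R : realType) (S : finType) (N : nat) (A : 'I_N -> finType)
  (P : S -> jact A -> S -> R) (r : S -> jact A -> R) (beta : R).
Hypothesis HP : is_kernel P.

Lemma of_det_pol (d : detpol S A) : is_jpolicy (of_det R d).
Proof.
move=> i s; split; first by move=> a; rewrite /of_det ler0n.
rewrite /of_det (bigD1 (d i s)) //= eqxx big1 ?addr0 // => a /negPf ->. by [].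
Qed.

Lemma EA (nu : jpol R S A) i s (w : A i -> R) (F : jact A -> R) :
  \sum_a w a * (\sum_(b : jact A) (\prod_(k < N | k != i) nu k s (b k)) * (b i == a)%:R * F b)
  = \sum_(b : jact A) (w (b i) * \prod_(k < N | k != i) nu k s (b k)) * F b.
Proof.
under eq_bigr do rewrite mulr_sumr.
rewrite exchange_big /=; apply: eq_bigr => b _.
rewrite (bigD1 (b i)) //= eqxx [X in _ + X]big1 ?addr0 /=; first by rewrite mulr1 mulrA.
by move=> a; rewrite eq_sym => /negPf ->; rewrite mulr0 mul0r mulr0.
Qed.

Lemma jprob_split (nu : jpol R S A) i s b :
  jprob nu s b = nu i s (b i) * \prod_(k < N | k != i) nu k s (b k).
Proof. by rewrite /jprob (bigD1 i). Qed.

Lemma sumA0 (nu : jpol R S A) s : is_jpolicy nu -> is_Vf P r beta nu (Vf P r beta nu) ->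
  \sum_b jprob nu s b * Af P r beta nu s b = 0.
Proof.
move=> Hnu HV.
set V := Vf P r beta nu; set J := Jmv P r beta nu.
have E : forall b, jprob nu s b * Af P r beta nu s b =
   jprob nu s b * f_sa P r beta nu s b + (\sum_s' jprob nu s b * P s b s' * V s' + (- (J + V s)) * jprob nu s b).
  move=> b; rewrite /Af /Qf -/V -/J.
  have -> : \sum_s' jprob nu s b * P s b s' * V s' = jprob nu s b * \sum_s' P s b s' * V s'.
    by rewrite mulr_sumr; apply: eq_bigr => t _; rewrite mulrA.
  ring.
under eq_bigr do rewrite E.
rewrite big_split /= big_split /= -mulr_sumr (jprob_sum1 s Hnu) mulr1.
rewrite exchange_big /=.
under [X in _ + (X + _)]eq_bigr do rewrite -mulr_suml.
rewrite (HV s) -/V -/J /f_s /Pmu; ring.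
Qed.

Lemma ExpAdv_self (nu : jpol R S A) j s : is_jpolicy nu -> is_Vf P r beta nu (Vf P r beta nu) ->
  \sum_a nu j s a * ExpAdv P r beta nu s a = 0.
Proof.
move=> Hnu HV; rewrite /ExpAdv EA.
under eq_bigr do rewrite -jprob_split.
exact: sumA0.
Qed.

Lemma ExpAdv_det0 (d : detpol S A) j s : is_Vf P r beta (of_det R d) (Vf P r beta (of_det R d)) ->
  ExpAdv P r beta (of_det R d) s (d j s) = 0.
Proof.
move=> HV; have := ExpAdv_self (of_det R d) j s (of_det_pol d) HV.
rewrite (bigD1 (d j s)) //= [X in X * _ + _]/of_det eqxx mul1r [X in _ + X]big1 ?addr0 //.
by move=> a /negPf H; rewrite [X in X * _]/of_det H mul0r.
Qed.

Lemma sum_upd (d d' : detpol S A) j s : (forall k, k != j -> d' k = d k) ->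
  \sum_b jprob (of_det R d') s b * Af P r beta (of_det R d) s b =
  ExpAdv P r beta (of_det R d) s (d' j s).
Proof.
move=> Hd.
have E : forall b, jprob (of_det R d') s b =
   (of_det R d') j s (b j) * \prod_(k < N | k != j) (of_det R d) k s (b k).
  move=> b; rewrite (jprob_split _ j); congr (_ * _); apply: eq_bigr => k Hk.
  by rewrite /of_det Hd.
under eq_bigr do rewrite E.
rewrite -(EA (of_det R d) j s (fun a => (of_det R d' : jpol R S A) j s a)).
rewrite (bigD1 (d' j s)) //= [X in X * _ + _]/of_det eqxx mul1r [X in _ + X]big1 ?addr0 //.
by move=> a /negPf H; rewrite [X in X * _]/of_det H mul0r.
Qed.


Variables (mu : nat -> detpol S A) (sigma : nat -> {perm 'I_N}).
Hypothesis Herg : forall nu : jpol R S A, is_jpolicy nu -> ergodic (Pmu P nu).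
Hypothesis Hrun : MV_MAPI_run P r beta mu sigma.
Hypothesis Hb : 0 <= beta.
Variable s0 : S.

Lemma det_Vf (d : detpol S A) : is_Vf P r beta (of_det R d) (Vf P r beta (of_det R d)).
Proof. exact: (Vf_is HP (of_det R d) s0 (of_det_pol d) (Herg _ (of_det_pol d)).1). Qed.

Lemma hat_other k (h : 'I_N) i : i != sigma k h -> hat mu sigma k h.+1 i = hat mu sigma k h i.
Proof.
move=> Hi; rewrite /hat ltnS leq_eqVlt.
have -> : (nat_of_ord ((sigma k)^-1 i)%g == nat_of_ord h) = false.
  apply/negP => /eqP/val_inj Heq; move/eqP: Hi; apply; by rewrite -Heq permKV.
by [].
Qed.

Lemma hat_j k (h : 'I_N) : hat mu sigma k h (sigma k h) = mu k (sigma k h) /\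
   hat mu sigma k h.+1 (sigma k h) = mu k.+1 (sigma k h).
Proof. by rewrite /hat permK ltnn ltnSn. Qed.

Lemma hat0 k : hat mu sigma k 0 = mu k.
Proof. by apply: functional_extensionality_dep => i; rewrite /hat ltn0. Qed.

Lemma hatN k : hat mu sigma k N = mu k.+1.
Proof. by apply: functional_extensionality_dep => i; rewrite /hat ltn_ord. Qed.

Notation J d := (Jmv P r beta (of_det R d)).

Lemma step k (h : 'I_N) :
  J (hat mu sigma k h) <= J (hat mu sigma k h.+1) /\
  ((exists s, mu k.+1 (sigma k h) s != mu k (sigma k h) s) ->
     J (hat mu sigma k h) < J (hat mu sigma k h.+1)).
Proof.
have [Hdj Hd'j] := hat_j k h.
set d := hat mu sigma k h in Hdj *; set d' := hat mu sigma k h.+1 in Hd'j *; set j := sigma k h in Hdj Hd'j *.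
have Hoth : forall i, i != j -> d' i = d i by move=> i; exact: hat_other.
have PD := perf_diff HP (of_det R d) (of_det R d') s0 (of_det_pol d') (det_Vf d).
have Hst := pi_stat HP s0 (of_det_pol d').
have Hpos := stat_pos (Pmu_stoch HP (of_det_pol d')) (Herg _ (of_det_pol d')).1 Hst.
have HL : Lf (pi_mu P (of_det R d')) (jprob (of_det R d')) (Af P r beta (of_det R d)) =
   \sum_s pi_mu P (of_det R d') s * ExpAdv P r beta (of_det R d) s (mu k.+1 j s).
  apply: eq_bigr => s _; congr (_ * _); rewrite (sum_upd d d' j s Hoth).
  by rewrite Hd'j.
have Hterm : forall s, 0 <= ExpAdv P r beta (of_det R d) s (mu k.+1 j s).
  move=> s; have [H1 _] := Hrun k h s.
  apply: le_trans (H1 (mu k j s)).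
  by rewrite -Hdj ExpAdv_det0 //; exact: det_Vf.
have Hsq : 0 <= beta * (Defs.eta P r (of_det R d') - Defs.eta P r (of_det R d)) ^+ 2.
  by rewrite mulr_ge0 // sqr_ge0.
have HL0 : 0 <= \sum_s pi_mu P (of_det R d') s * ExpAdv P r beta (of_det R d) s (mu k.+1 j s).
  by apply: sumr_ge0 => s _; rewrite mulr_ge0 // ltW.
split; first by rewrite -subr_ge0 PD HL; lra.
case=> s Hs.
have Hgt : 0 < ExpAdv P r beta (of_det R d) s (mu k.+1 j s).
  rewrite lt_def Hterm andbT; apply/negP => /eqP H0.
  have [H1 H2] := Hrun k h s.
  move/eqP: Hs; apply; apply: H2 => a.
  apply: le_trans (H1 a) _.
  by rewrite -/d -/j H0 -Hdj ExpAdv_det0 //; exact: det_Vf.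
have HLgt : 0 < \sum_s pi_mu P (of_det R d') s * ExpAdv P r beta (of_det R d) s (mu k.+1 j s).
  rewrite (bigD1 s) //=.
  have : 0 < pi_mu P (of_det R d') s * ExpAdv P r beta (of_det R d) s (mu k.+1 j s) by rewrite mulr_gt0.
  have : 0 <= \sum_(t | t != s) pi_mu P (of_det R d') t * ExpAdv P r beta (of_det R d) t (mu k.+1 j t).
    by apply: sumr_ge0 => t _; rewrite mulr_ge0 // ltW.
  lra.
by rewrite -subr_gt0 PD HL; lra.
Qed.

Lemma chain k h1 h2 : (h1 <= h2 <= N)%N -> J (hat mu sigma k h1) <= J (hat mu sigma k h2).
Proof.
elim: h2 => [|h2 IH] /andP [H1 H2].
  by move: H1; rewrite leqn0 => /eqP ->.
move: H1; rewrite leq_eqVlt => /orP [/eqP -> //| H1].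
apply: le_trans (IH _) _; first by rewrite -ltnS H1 /= ltnW.
exact: (step k (Ordinal H2)).1.
Qed.

Lemma mono k : J (mu k) <= J (mu k.+1).
Proof. by rewrite -hat0 -hatN; apply: chain; rewrite leq0n leqnn. Qed.

Lemma strict k : ~ stopped mu k -> J (mu k) < J (mu k.+1).
Proof.
move=> Hns.
have [i Hi] : exists i, ~ forall s, mu k.+1 i s = mu k i s.
  by apply/existsNP => H; apply: Hns => i s; apply: H.
have [s Hs] : exists s, ~ mu k.+1 i s = mu k i s by apply/existsNP.
set h := ((sigma k)^-1 i)%g.
have Hsh : sigma k h = i by rewrite /h permKV.
have [_ Hst] := step k h.
have Hlt := Hst (ex_intro _ s (introN eqP (eq_ind_r (fun x => ~ mu k.+1 x s = mu k x s) Hs Hsh))).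
rewrite -hat0 -hatN.
apply: le_lt_trans (chain k 0 h _) _; first by rewrite leq0n /= ltnW.
apply: lt_le_trans Hlt _.
by apply: chain; rewrite ltn_ord leqnn.
Qed.

Lemma term : exists K, stopped mu K.
Proof.
apply/not_existsP => Hn.
have Hlt : forall m n, (m < n)%N -> J (mu m) < J (mu n).
  move=> m n; elim: n => [//|n IH]; rewrite ltnS leq_eqVlt => /orP [/eqP ->|H].
    exact: strict n (Hn n).
  by apply: lt_trans (IH H) (strict n (Hn n)).
pose T := {dffun forall i : 'I_N, {ffun S -> A i}}.
pose code := fun k : 'I_(#|T|.+1) => ([ffun i => [ffun s => mu k i s]] : T).
have Hinj : injective code.
  move=> m n Hmn.
  have Heq : mu m = mu n.
    apply: functional_extensionality_dep => i; apply: funext => s.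
    by have := congr1 (fun f : T => f i s) Hmn; rewrite /code !ffunE.
  apply/val_inj => /=.
  case: (ltngtP m n) => // H; have := Hlt _ _ H; by rewrite Heq ltxx.
by have := leq_card code Hinj; rewrite card_ord ltnn.
Qed.


Section FO.
Variables (m0 : jpol R S A) (i : 'I_N) (nu : S -> A i -> R).
Hypotheses (Hm0 : is_jpolicy m0) (Hnu : is_policy_i nu).
Hypothesis Hopt : forall s (a : A i), ExpAdv P r beta m0 s a <= 0.

Lemma mix_i d : mix m0 i nu d i = fun s a => (1 - d) * m0 i s a + d * nu s a.
Proof. by rewrite /mix dfwith_in. Qed.

Lemma mix_out d k : k != i -> mix m0 i nu d k = m0 k.
Proof. by move=> H; rewrite /mix dfwith_out // eq_sym. Qed.

Lemma mix_pol d : 0 <= d -> d <= 1 -> is_jpolicy (mix m0 i nu d).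
Proof.
move=> d0 d1 k s; case: (eqVneq k i) => [->|Hk].
  rewrite mix_i; split.
    move=> a; apply: addr_ge0; apply: mulr_ge0 => //; [by rewrite subr_ge0|exact: (Hm0 i s).1|exact: (Hnu s).1].
  rewrite big_split /= -!mulr_sumr (Hm0 i s).2 (Hnu s).2; ring.
by rewrite mix_out //; exact: Hm0 k s.
Qed.

Lemma mix0 : mix m0 i nu 0 = m0.
Proof.
apply: functional_extensionality_dep => k; case: (eqVneq k i) => [->|Hk]; last exact: mix_out.
by rewrite mix_i; apply: funext => s; apply: funext => a; rewrite subr0 mul1r mul0r addr0.
Qed.

Definition q1 s (b : jact A) := nu s (b i) * \prod_(k < N | k != i) m0 k s (b k).

Lemma jprob_mix d s b : jprob (mix m0 i nu d) s b = (1 - d) * jprob m0 s b + d * q1 s b.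
Proof.
rewrite (jprob_split _ i) (jprob_split m0 i) mix_i.
have -> : \prod_(k < N | k != i) mix m0 i nu d k s (b k) = \prod_(k < N | k != i) m0 k s (b k).
  by apply: eq_bigr => k Hk; rewrite mix_out.
rewrite /q1; ring.
Qed.

Lemma sum_mix d s (F : jact A -> R) : \sum_b jprob (mix m0 i nu d) s b * F b =
  (1 - d) * \sum_b jprob m0 s b * F b + d * \sum_b q1 s b * F b.
Proof.
under eq_bigr do rewrite jprob_mix.
rewrite !mulr_sumr -big_split; apply: eq_bigr => b _ /=; ring.
Qed.

Definition gA s := \sum_b q1 s b * Af P r beta m0 s b.

Lemma gA_le0 s : gA s <= 0.
Proof.
have -> : gA s = \sum_a nu s a * ExpAdv P r beta m0 s a by rewrite /ExpAdv EA.
apply: sumr_le0 => a _; apply: mulr_ge0_le0; [exact: (Hnu s).1|exact: Hopt].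
Qed.

Definition M1 s s' := \sum_b q1 s b * P s b s'.

Lemma Pmu_mix d s s' : Pmu P (mix m0 i nu d) s s' = (1 - d) * Pmu P m0 s s' + d * M1 s s'.
Proof. exact: sum_mix. Qed.

Lemma fo_main : exists l : R,
  ((fun delta : R => (Jmv P r beta (mix m0 i nu delta) - Jmv P r beta (mix m0 i nu 0)) / delta)
     @ (0 : R)^'+ --> l) /\ l <= 0.
Proof.
rewrite mix0.
set p0 := pi_mu P m0.
have Hst0 := pi_stat HP s0 Hm0.
have Irr0 := (Herg _ Hm0).1.
have Stoch0 := Pmu_stoch HP Hm0.
have HV0 : is_Vf P r beta m0 (Vf P r beta m0) := Vf_is HP m0 s0 Hm0 Irr0.
have Hp0 := Hst0.1.
have Hp01 := Hst0.2.1.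
have Hpois : forall h : S -> R, exists u : {ffun S -> R},
    forall s, u s = (h s - \sum_t p0 t * h t) + \sum_s' Pmu P m0 s s' * u s'.
  move=> h; apply: (poisson Stoch0 Irr0 Hst0).
  under eq_bigr do rewrite mulrBr.
  by rewrite sumrB -mulr_suml Hp01 mul1r subrr.
pose r0 := fun s => \sum_b jprob m0 s b * r s b.
pose r1 := fun s => \sum_b q1 s b * r s b.
have [ug Hug] := Hpois gA.
have [ur Hur] := Hpois r0.
pose Bg := \sum_s `|\sum_s' M1 s s' * ug s' - \sum_s' Pmu P m0 s s' * ug s'|.
pose C1 := \sum_s `|(\sum_s' M1 s s' * ur s' - \sum_s' Pmu P m0 s s' * ur s') + (r1 s - r0 s)|.
exists (\sum_s p0 s * gA s); split; last first.
  by apply: sumr_le0 => s _; apply: mulr_ge0_le0 => //; exact: gA_le0.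
apply: (@lim_lin R _ _ (Bg + beta * C1 ^+ 2)) => d d0 d1.
have Hpd := mix_pol d (ltW d0) (ltW d1).
set pd := pi_mu P (mix m0 i nu d).
have Hstd := pi_stat HP s0 Hpd.
have Hpd0 := Hstd.1.
have Hpd1 := Hstd.2.1.
have Hstd' : forall s', \sum_s pd s * ((1 - d) * Pmu P m0 s s' + d * M1 s s') = pd s'.
  move=> s'; rewrite -(Hstd.2.2 s'); apply: eq_bigr => s _; by rewrite Pmu_mix.
have PD := perf_diff HP m0 (mix m0 i nu d) s0 Hpd HV0.
have HL : Lf pd (jprob (mix m0 i nu d)) (Af P r beta m0) = d * \sum_s pd s * gA s.
  rewrite /Lf mulr_sumr; apply: eq_bigr => s _.
  rewrite (sum_mix d s (Af P r beta m0 s)) (sumA0 m0 s Hm0 HV0) /gA; ring.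
pose E := \sum_s pd s * ((\sum_s' M1 s s' * ur s' - \sum_s' Pmu P m0 s s' * ur s') + (r1 s - r0 s)).
have Heta : Defs.eta P r (mix m0 i nu d) - Defs.eta P r m0 = d * E.
  have Sh := mshift Hur Hpd1 Hstd'.
  have -> : Defs.eta P r (mix m0 i nu d) = \sum_s pd s * r0 s + d * \sum_s pd s * (r1 s - r0 s).
    rewrite mulr_sumr -big_split /= /Defs.eta -/pd; apply: eq_bigr => s _.
    rewrite (sum_mix d s (r s)) -/(r0 s) -/(r1 s); ring.
  have -> : Defs.eta P r m0 = \sum_s p0 s * r0 s by [].
  rewrite /E.
  have -> : \sum_s pd s * (\sum_s' M1 s s' * ur s' - \sum_s' Pmu P m0 s s' * ur s' + (r1 s - r0 s))
    = \sum_s pd s * (\sum_s' M1 s s' * ur s' - \sum_s' Pmu P m0 s s' * ur s') + \sum_s pd s * (r1 s - r0 s).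
    by rewrite -big_split; apply: eq_bigr => s _; rewrite mulrDr.
  have : \sum_s pd s * r0 s - \sum_s p0 s * r0 s = d * \sum_s pd s * (\sum_s' M1 s s' * ur s' - \sum_s' Pmu P m0 s s' * ur s') := Sh.
  lra.
have Sg := mshift Hug Hpd1 Hstd'.
set G := \sum_s pd s * (\sum_s' M1 s s' * ug s' - \sum_s' Pmu P m0 s s' * ug s') in Sg.
have HG : `|G| <= Bg by apply: bound_sum.
have HE : `|E| <= C1 by apply: bound_sum.
move: HG HE; rewrite !ler_norml => /andP [HG1 HG2] /andP [HE1 HE2].
have HE2' : E ^+ 2 <= C1 ^+ 2 by nra.
have HE0 : 0 <= E ^+ 2 by rewrite sqr_ge0.
have Hf : (Jmv P r beta (mix m0 i nu d) - Jmv P r beta m0) / d - \sum_s p0 s * gA s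
    = d * G + beta * d * E ^+ 2.
  rewrite PD HL Heta.
  have -> : \sum_s p0 s * gA s = \sum_s pd s * gA s - d * G by lra.
  by field; rewrite gt_eqF.
rewrite Hf.
have H1 : d * G <= d * Bg by rewrite ler_wpM2l // ltW.
have H2 : d * (- Bg) <= d * G by rewrite ler_wpM2l // ltW.
have H3 : beta * d * E ^+ 2 <= beta * d * C1 ^+ 2 by rewrite ler_wpM2l // mulr_ge0 // ltW.
have H4 : 0 <= beta * d * E ^+ 2 by apply: mulr_ge0 => //; apply: mulr_ge0 => //; exact: ltW.
apply/andP; split; nra.
Qed.

End FO.
End Agents.

Local Close Scope classical_set_scope.

Theorem theorem2 (R : realType) (S : finType) (N : nat) (A : 'I_N -> finType)
  (P : S -> jact A -> S -> R) (r : S -> jact A -> R) (beta : R)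
  (mu : nat -> @detpol S N A) (sigma : nat -> {perm 'I_N}) :
  0 <= beta ->
  is_kernel P ->
  (forall nu : @jpol R S N A, is_jpolicy nu -> ergodic (Pmu P nu)) ->
  MV_MAPI_run P r beta mu sigma ->
  (forall (k h : nat), (h < N)%N ->
     Jmv P r beta (of_det R (hat mu sigma k h))
       <= Jmv P r beta (of_det R (hat mu sigma k h.+1))) /\
  (forall k : nat,
     Jmv P r beta (of_det R (mu k)) <= Jmv P r beta (of_det R (mu k.+1))) /\
  (exists K : nat,
     (forall k, (k < K)%N -> ~ stopped mu k) /\ stopped mu K /\
     fo_stationary P r beta (of_det R (mu K))).
Proof.
move=> Hb HP Herg Hrun.
case: (pickP (@predT S)) => [s0 _ | HS0]; last first.
  have HJ0 : forall nu : jpol R S A, Jmv P r beta nu = 0.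
    move=> nu; rewrite /Jmv /zeta /Defs.eta !big_pred0 // ?mulr0 ?subr0 //.
  split; first by move=> k h _; rewrite !HJ0.
  split; first by move=> k; rewrite !HJ0.
  exists 0%N; split => //; split; first by move=> i s; have := HS0 s.
  move=> i nu _; exists 0; split => //.
  have -> : (fun delta : R => (Jmv P r beta (mix (of_det R (mu 0%N)) i nu delta) -
      Jmv P r beta (mix (of_det R (mu 0%N)) i nu 0)) / delta) = fun _ => 0.
    by apply: funext => d; rewrite !HJ0 subrr mul0r.
  exact: cvg_cst.
split.
  move=> k h hN; exact: (step _ _ _ _ _ _ _ HP _ _ Herg Hrun Hb s0 k (Ordinal hN)).1.
split; first by move=> k; exact: (mono _ _ _ _ _ _ _ HP _ _ Herg Hrun Hb s0 k).
have HexK : exists k, `[< stopped mu k >] by have [K HK] := term _ _ _ _ _ _ _ HP _ _ Herg Hrun Hb s0; exists K; apply/asboolP.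
case: (ex_minnP HexK) => K /asboolP HK Hmin.
exists K; split.
  move=> k Hk Hs; have := Hmin k (introT (asboolP _) Hs); rewrite leqNgt Hk //.
split => //.
move=> i nu Hnu.
apply: (fo_main _ _ _ _ _ _ _ HP Herg Hb s0 _ _ _ (of_det_pol _ _ _ _ (mu K)) Hnu).
move=> s; rewrite -[i](permKV (sigma K)); set h := ((sigma K)^-1 _)%g.
move=> a.
have Hhat : hat mu sigma K h = mu K.
  apply: functional_extensionality_dep => j; rewrite /hat; case: ifP => // _.
  by apply: funext => t; exact: HK.
have [H1 _] := Hrun K h s.
rewrite Hhat in H1.
apply: le_trans (H1 a) _.
rewrite HK (ExpAdv_det0 _ _ _ _ _ _ _ (mu K)) //; exact: (det_Vf _ _ _ _ _ _ _ HP Herg s0).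
Qed.
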